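(* Let $p_0<p_g<1-S$ and set $\hat\theta_g:=(p_g+S)\wedge1$. Suppose there exist $\mu_g\in(0,1)$, $\bar\theta_g,\bar\theta_m$ and $\hat\theta\in(0,\hat\theta_g)$ with $\bar\theta_g<\bar\theta_m<p_g$ satisfying: (a) $p_g+\bar\theta_g=2\bar\theta_m$; (b) $2\bar\theta_m+2S=\hat\theta+p_g+S$; (c) $\bar\theta_g\ge I$; (d) $\mu_g\bar\theta_g+(1-\mu_g)\bar\theta_m=\mathbb{E}[\theta\mid\theta\le\hat\theta]$; (e) $\bar\theta_g\ge\mathbb{E}[\theta\mid\theta\le F^{-1}(\mu_gF(\hat\theta))]$; (f) for all $p'\in(\bar\theta_g,p_g]$: $\dfrac{\mu_gF(\hat\theta)\bar\theta_g+\int_{\hat\theta}^{p'+S}\theta f(\theta)d\theta}{\mu_gF(\hat\theta)+F(p'+S)-F(\hat\theta)}-p'<0$; (g) for all $p'\in(p_g,1-S]$: $\dfrac{(1-\mu_g)F(\hat\theta)\bar\theta_m+\int_{\hat\theta_g}^{p'+S}\theta f(\theta)d\theta}{(1-\mu_g)F(\hat\theta)+F(p'+S)-F(\hat\theta_g)}-p'<0$. Then there exists a short-lived stimulation equilibrium of the two-period model with a transparent bailout at $p_g$, in which types $\theta\le\hat\theta$ sell in both periods (a fraction $\mu_g$ of them, with average value $\bar\theta_g$, to the government at $t=1$ and then at price $\bar\theta_g$ at $t=2$; the rest, with average value $\bar\theta_m$, to the market at price $\bar\theta_m$ in both periods), types in $(\hat\theta,\hat\theta_g]$ sell only to the government at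 $t=1$, and types above $\hat\theta_g$ never sell.
   Context: Two-period model: a continuum of firms with privately known type $\theta\in[0,1]$, cdf $F$, density $f>0$, $f$ strictly log-concave, and for every $b\in(0,1]$ the map $a\mapsto 2\mathbb{E}[\theta\mid a<\theta<b]-\mathbb{E}[\theta\mid\theta\le a]$ is increasing on $(0,b)$. A type-$\theta$ firm holds one unit of an asset worth $\theta$ in each of two periods $t=1,2$. In each period it has a project with cost $I>0$ and net return $S>0$ that can be funded only by selling that period's unit; selling at price $p\ge I$ yields $p+S$ for that period, not selling yields $\theta$. Firms' total payoff is the sum over periods (equilibria in the limit of period-2 weight $\delta\to1$). In each period competitive short-lived risk-neutral buyers make Bertrand price offers, breaking even in expectation (indifferent buyers buy). At $t=1$ only, the government offers to buy one unit at price $p_g$; firms sell their $t=1$ unit to the government, to the market, or not at all. $t=1$ market sales are unobserved at $t=2$; acceptance of the government offer is observed at $t=2$ (transparent bailout), so $t=2$ buyers can make separate offers to recipients and non-recipients. Equilibrium means perfect Bayesian equilibrium. Laissez-faire: $\theta_0\in(0,1)$ uniquely solves $\theta_0-S=\mathbb{E}[\theta\mid\theta\le\theta_0]$, $p_0:=\mathbb{E}[\theta\mid\theta\le\theta_0]\ge I$. Every equilibrium has cutoffs $0<\hat\theta\le\hat\theta_g\le\theta_2$: types $\le\hat\theta$ sell in both periods, types in $(\hat\theta,\hat\theta_g]$ sell only at $t=1$ to the government, types in $(\hat\theta_g,\theta_2]$ sell only at $t=2$, higher types never sell. A short-lived stimulation equilibrium is one with $\hat\theta_g=\theta_2$. 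*)

(* Defs.v *)
From Stdlib Require Import Reals.
From Coquelicot Require Import Coquelicot.
Open Scope R_scope.

Definition cdf (f : R -> R) (x : R) : R := RInt f 0 x.

Definition cmean_le (f : R -> R) (a : R) : R :=
  RInt (fun t => t * f t) 0 a / RInt f 0 a.

Definition cmean_btw (f : R -> R) (a b : R) : R :=
  RInt (fun t => t * f t) a b / RInt f a b.

Definition density_assumptions (f : R -> R) : Prop :=
  (forall x, 0 <= x <= 1 -> 0 < f x) /\
  ex_RInt f 0 1 /\ RInt f 0 1 = 1 /\
  (forall x y t, 0 <= x <= 1 -> 0 <= y <= 1 -> x <> y -> 0 < t < 1 ->
     t * ln (f x) + (1 - t) * ln (f y) < ln (f (t * x + (1 - t) * y))) /\
  (forall b, 0 < b <= 1 -> forall a1 a2, 0 < a1 -> a1 < a2 -> a2 < b ->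
     2 * cmean_btw f a1 b - cmean_le f a1 < 2 * cmean_btw f a2 b - cmean_le f a2).

(* one-period payoff of selling the period's unit at price p: the project
   (cost I, net return S) is funded iff p >= I. *)
Definition u (I S p : R) : R := if Rle_dec I p then p + S else p.

Definition le_ind (a b : R) : R := if Rle_dec a b then 1 else 0.

Record profile := mkProfile {
  gov : R -> R;      (* prob. that type theta sells to the government at t=1 *)
  mkt : R -> R;      (* prob. that type theta sells to the market at t=1 *)
  sell_r : R -> R;   (* prob. of selling at t=2, recipient of the bailout *)
  sell_m : R -> R;   (* prob. of selling at t=2, sold to market at t=1 *)
  sell_o : R -> R;   (* prob. of selling at t=2, did not sell at t=1 *)
  price1 : R;
  price2r : R;       (* t=2 price offered to government-offer recipients *)
  price2n : R        (* t=2 price offered to non-recipients *)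
}.

Definition none_w (P : profile) (t : R) : R := 1 - gov P t - mkt P t.

Definition V2 (I S p t : R) : R := Rmax (u I S p) t.

Definition VG (I S pg : R) (P : profile) (t : R) : R :=
  u I S pg + V2 I S (price2r P) t.
Definition VM (I S : R) (P : profile) (t : R) : R :=
  u I S (price1 P) + V2 I S (price2n P) t.
Definition VN (I S : R) (P : profile) (t : R) : R :=
  t + V2 I S (price2n P) t.

Definition mass (f w : R -> R) : R := RInt (fun t => w t * f t) 0 1.
Definition value (f w : R -> R) : R := RInt (fun t => t * (w t * f t)) 0 1.

Definition integrable_pool (f w : R -> R) : Prop :=
  ex_RInt (fun t => w t * f t) 0 1 /\ ex_RInt (fun t => t * (w t * f t)) 0 1.

Definition breaks_even (f w : R -> R) (p : R) : Prop :=
  0 < mass f w -> value f w = p * mass f w.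

(* no buyer can profitably (or break-even, indifferent buyers buy) offer a
   higher price p' attracting the pool w p' *)
Definition no_profitable_deviation (f : R -> R) (pool : R -> R -> R) (p : R) : Prop :=
  forall p', p < p' -> 0 < mass f (pool p') ->
    value f (pool p') < p' * mass f (pool p').

Definition w2r (P : profile) (t : R) : R := gov P t * sell_r P t.
Definition w2n (P : profile) (t : R) : R :=
  mkt P t * sell_m P t + none_w P t * sell_o P t.

Definition is_equilibrium (f : R -> R) (I S pg : R) (P : profile) : Prop :=
  (forall t, 0 <= t <= 1 ->
     0 <= gov P t /\ 0 <= mkt P t /\ gov P t + mkt P t <= 1 /\
     0 <= sell_r P t <= 1 /\ 0 <= sell_m P t <= 1 /\ 0 <= sell_o P t <= 1) /\
  integrable_pool f (gov P) /\ integrable_pool f (mkt P) /\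
  integrable_pool f (w2r P) /\ integrable_pool f (w2n P) /\
  (forall t, 0 <= t <= 1 ->
     (0 < sell_r P t -> t <= u I S (price2r P)) /\
     (sell_r P t < 1 -> u I S (price2r P) <= t) /\
     (0 < sell_m P t -> t <= u I S (price2n P)) /\
     (sell_m P t < 1 -> u I S (price2n P) <= t) /\
     (0 < sell_o P t -> t <= u I S (price2n P)) /\
     (sell_o P t < 1 -> u I S (price2n P) <= t)) /\
  (forall t, 0 <= t <= 1 ->
     (0 < gov P t -> VM I S P t <= VG I S pg P t /\ VN I S P t <= VG I S pg P t) /\
     (0 < mkt P t -> VG I S pg P t <= VM I S P t /\ VN I S P t <= VM I S P t) /\
     (0 < none_w P t -> VG I S pg P t <= VN I S P t /\ VM I S P t <= VN I S P t)) /\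
  breaks_even f (mkt P) (price1 P) /\
  breaks_even f (w2r P) (price2r P) /\
  breaks_even f (w2n P) (price2n P) /\
  no_profitable_deviation f
    (fun p' t => le_ind (VG I S pg P t) (u I S p' + V2 I S (price2n P) t) *
                 le_ind (VN I S P t) (u I S p' + V2 I S (price2n P) t))
    (price1 P) /\
  no_profitable_deviation f
    (fun p' t => gov P t * le_ind t (u I S p')) (price2r P) /\
  no_profitable_deviation f
    (fun p' t => (1 - gov P t) * le_ind t (u I S p')) (price2n P).

Definition sls_structure (f : R -> R) (S pg mu thg thm th : R)
    (P : profile) : Prop :=
  let thG := Rmin (pg + S) 1 in
  price1 P = thm /\ price2n P = thm /\ price2r P = thg /\
  (forall t, 0 <= t <= th ->
     gov P t + mkt P t = 1 /\ sell_r P t = 1 /\ sell_m P t = 1) /\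
  RInt (fun t => gov P t * f t) 0 th = mu * cdf f th /\
  RInt (fun t => t * (gov P t * f t)) 0 th = mu * cdf f th * thg /\
  RInt (fun t => t * (mkt P t * f t)) 0 th = (1 - mu) * cdf f th * thm /\
  (forall t, th < t <= thG -> gov P t = 1 /\ sell_r P t = 0) /\
  (forall t, thG < t <= 1 -> gov P t = 0 /\ mkt P t = 0 /\ sell_o P t = 0).

(* Main.v *)
Require Import Defs.
From Stdlib Require Import Reals Lra Ranalysis5 List RList.
From Coquelicot Require Import Coquelicot.
Open Scope R_scope.

Lemma SF_mult_sub :
  forall (a b:R) (f g:R -> R) (l1:list R),
    is_subdivision f a b l1 ->
    is_subdivision g a b l1 ->
    is_subdivision (fun x:R => f x * g x) a b l1.
Proof.
  intros a b f g l1 (x0,(H0,(H1,(H2,(H3,H4)))))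
         (x,(_,(_,(_,(_,H9))))).
  exists (FF l1 (fun x:R => f x * g x)); repeat split.
  1,2,3:assumption.
  - apply StepFun_P20; rewrite H3; auto with arith.
  - intros i H8 x1 H10; unfold open_interval in H10, H9, H4;
      rewrite (H9 _ H8 _ H10); rewrite (H4 _ H8 _ H10);
      assert (H11 : l1 <> nil).
    { red; intro H11; rewrite H11 in H8; elim (Nat.nlt_0_r _ H8). }
    destruct (RList_P19 _ H11) as (r,(r0,H12));
      rewrite H12; unfold FF;
      change
        (pos_Rl x0 i * pos_Rl x i =
           pos_Rl
             (map (fun x2:R => f x2 * g x2) (mid_Rlist (cons r r0) r))
             (S i)); rewrite RList_P12.
    { rewrite RList_P13.
      { rewrite <- H12; rewrite (H9 _ H8); try rewrite (H4 _ H8); lra. }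
      rewrite <- H12; assumption. }
    rewrite RList_P14; simpl; rewrite H12 in H8; simpl in H8;
      apply -> Nat.succ_lt_mono; apply H8.
Qed.

Lemma SF_mult : forall (a b:R) (f g:StepFun a b), IsStepFun (fun x:R => f x * g x) a b.
Proof.
  intros a b f g; unfold IsStepFun; assert (H := pre f);
    assert (H0 := pre g); unfold IsStepFun in H, H0; elim H;
      elim H0; intros; apply existT with (cons_ORlist x0 x).
  apply SF_mult_sub;
    [ apply StepFun_P23 with g; assumption
      | apply StepFun_P25 with f; assumption ].
Qed.

Lemma unif_approx :
  forall (f:R -> R) (a b:R),
    a < b ->
    (forall x:R, a <= x <= b -> continuity_pt f x) ->
    forall eps : posreal,
    {phi : StepFun a b | forall t, a <= t <= b -> Rabs (f t - phi t) < eps}.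
Proof.
  intros f a b H H0 eps.
  elim (Heine_cor2 H0 eps); intros del H4;
    elim (SubEqui_P9 del f H); intros phi [H5 H6]; exists phi.
  intros t H7.
    cut
      (forall t:R,
          a <= t <= b ->
          t = b \/
            (exists i : nat,
                (i < pred (length (SubEqui del H)))%nat /\
                  co_interval (pos_Rl (SubEqui del H) i) (pos_Rl (SubEqui del H) (S i))
                              t)).
  { intro; elim (H1 _ H7); intro.
    { rewrite H2; rewrite H5; unfold Rminus; rewrite Rplus_opp_r;
        rewrite Rabs_R0; apply (cond_pos eps). }
    elim H2; clear H2; intros I [H9 H10]; assert (H11 := H6 I H9 t H10);
      rewrite H11; apply H4.
    - assumption.
    - apply SubEqui_P8; apply Nat.lt_trans with (pred (length (SubEqui del H))).
      { assumption. }
      apply Nat.lt_pred_l; red; intro; rewrite H2 in H9;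
        elim (Nat.nlt_0_r _ H9).
    - unfold co_interval in H10; elim H10; clear H10; intros; rewrite Rabs_right.
      { rewrite SubEqui_P5 in H9; simpl in H9; inversion H9.
        { apply Rplus_lt_reg_l with (pos_Rl (SubEqui del H) (max_N del H)).
          replace
            (pos_Rl (SubEqui del H) (max_N del H) +
               (t - pos_Rl (SubEqui del H) (max_N del H))) with t;
            [ idtac | ring ]; apply Rlt_le_trans with b.
          { rewrite H10 in H3;
              assert (H13 : S (max_N del H) = pred (length (SubEqui del H))).
            { rewrite SubEqui_P5; reflexivity. }
            rewrite H13 in H3; rewrite SubEqui_P2 in H3; apply H3. }
          rewrite SubEqui_P6.
          2: apply Nat.lt_succ_diag_r.
          unfold max_N; destruct (maxN del H) as (?&?&H13);
            replace (a + INR x * del + del) with (a + INR (S x) * del);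
            [ assumption | rewrite S_INR; ring ]. }
        apply Rplus_lt_reg_l with (pos_Rl (SubEqui del H) I);
          replace (pos_Rl (SubEqui del H) I + (t - pos_Rl (SubEqui del H) I)) with t;
          [ idtac | ring ];
          replace (pos_Rl (SubEqui del H) I + del) with (pos_Rl (SubEqui del H) (S I)).
        { assumption. }
        repeat rewrite SubEqui_P6.
        - rewrite S_INR; ring.
        - assumption.
        - apply Nat.lt_succ_r; assumption. }
      apply Rge_minus; apply Rle_ge; assumption. }
  intros t0 H2; clear H0 H4 phi H5 H6 t H7; case (Req_dec t0 b); intro H0.
  { left; assumption. }
  right; set (I := fun j:nat => a + INR j * del <= t0);
    assert (H1 :  exists n : nat, I n).
  { exists 0%nat; unfold I; rewrite Rmult_0_l; rewrite Rplus_0_r; elim H2;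
      intros; assumption. }
  assert (H4 : Nbound I).
  { unfold Nbound; exists (S (max_N del H)); intros n Hn; unfold max_N;
      destruct (maxN del H) as (?&_&H5);
      apply INR_le; apply Rmult_le_reg_l with (pos del).
    { apply (cond_pos del). }
    apply Rplus_le_reg_l with a; do 2 rewrite (Rmult_comm del);
      apply Rle_trans with t0; unfold I in Hn; try assumption;
      apply Rle_trans with b; try assumption; elim H2; intros;
      assumption. }
  elim (Nzorn H1 H4); intros N [H5 H6]; assert (H7 : (N < S (max_N del H))%nat).
  { unfold max_N; case (maxN del H) as (?&?&?); apply INR_lt;
      apply Rmult_lt_reg_l with (pos del).
    { apply (cond_pos del). }
    apply Rplus_lt_reg_l with a; do 2 rewrite (Rmult_comm del);
      apply Rle_lt_trans with t0; unfold I in H5; try assumption;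
      apply Rlt_le_trans with b; try assumption;
      elim H2; intros.
    elim H9; intro.
    { assumption. }
    elim H0; assumption. }
  exists N; split.
  { rewrite SubEqui_P5; simpl; assumption. }
  unfold co_interval; split.
  { rewrite SubEqui_P6.
    { apply H5. }
    assumption. }
  inversion H7.
  { replace (S (max_N del H)) with (pred (length (SubEqui del H))).
    { rewrite (SubEqui_P2 del H); elim H2; intros.
      elim H9; intro.
      { assumption. }
      elim H0; assumption. }
    rewrite SubEqui_P5; reflexivity. }
  rewrite SubEqui_P6.
  { destruct (Rle_dec (a + INR (S N) * del) t0) as [Hle|Hnle].
    { assert (H11 := H6 (S N) Hle); elim (Nat.nle_succ_diag_l _ H11). }
    auto with real. }
  apply Nat.lt_succ_r; assumption.
Qed.

Lemma RI_mult_cont : forall (f g : R -> R) (a b K : R), a < b ->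
  (forall x, a <= x <= b -> continuity_pt g x) ->
  (forall x, a <= x <= b -> Rabs (g x) <= K) ->
  Riemann_integrable f a b -> Riemann_integrable (fun t => g t * f t) a b.
Proof.
  intros f g a b K Hab Hc HK Hf eps.
  set (K' := Rabs K + 1).
  assert (HK' : 0 < K') by (unfold K'; pose proof (Rabs_pos K); lra).
  assert (He1 : 0 < eps / (2 * K')).
  { apply Rdiv_lt_0_compat; [apply cond_pos | lra]. }
  destruct (Hf (mkposreal _ He1)) as [phi [psi [Hb Hint]]].
  set (A := Rabs (RiemannInt_SF (mkStepFun (StepFun_P32 phi)))).
  assert (HA : 0 <= A) by apply Rabs_pos.
  assert (Hd : 0 < eps / (2 * (A + 1))).
  { apply Rdiv_lt_0_compat; [apply cond_pos | lra]. }
  destruct (unif_approx g a b Hab Hc (mkposreal _ Hd)) as [sg Hsig].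
  exists (mkStepFun (SF_mult a b sg phi)).
  set (KPsi := mkStepFun (StepFun_P28 K' (mkStepFun (StepFun_P4 a b 0)) psi)).
  exists (mkStepFun (StepFun_P28 (eps / (2 * (A + 1))) KPsi (mkStepFun (StepFun_P32 phi)))).
  assert (Hmin : Rmin a b = a) by (apply Rmin_left; lra).
  assert (Hmax : Rmax a b = b) by (apply Rmax_right; lra).
  split.
  - intros t Ht. rewrite Hmin, Hmax in Ht. simpl. unfold fct_cte.
    specialize (Hb t). rewrite Hmin, Hmax in Hb. specialize (Hb Ht).
    specialize (Hsig t Ht). simpl in Hsig. specialize (HK t Ht).
    replace (g t * f t - sg t * phi t) with (g t * (f t - phi t) + phi t * (g t - sg t)) by ring.
    eapply Rle_trans; [apply Rabs_triang|].
    rewrite !Rabs_mult.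
    assert (Hpsi : 0 <= psi t) by (eapply Rle_trans; [apply Rabs_pos| apply Hb]).
    assert (Rabs (g t) <= K') by (unfold K'; pose proof (Rle_abs K); lra).
    assert (Rabs (g t) * Rabs (f t - phi t) <= K' * psi t).
    { apply Rmult_le_compat; auto using Rabs_pos. }
    assert (Rabs (phi t) * Rabs (g t - sg t) <= eps / (2 * (A + 1)) * Rabs (phi t)).
    { rewrite Rmult_comm. apply Rmult_le_compat_r; [apply Rabs_pos| lra]. }
    lra.
  - rewrite StepFun_P30. unfold KPsi. rewrite StepFun_P30. rewrite StepFun_P18.
    fold A.
    set (B := RiemannInt_SF (mkStepFun (StepFun_P32 phi))).
    fold B in A.
    simpl in Hint.
    set (P := RiemannInt_SF psi) in *.
    eapply Rle_lt_trans; [apply Rabs_triang|].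
    rewrite Rmult_0_l, Rplus_0_l, !Rabs_mult.
    rewrite (Rabs_right K') by lra.
    rewrite (Rabs_right (eps / (2 * (A + 1)))) by lra.
    assert (K' * Rabs P < K' * (eps / (2 * K'))) by (apply Rmult_lt_compat_l; lra).
    assert (E1 : K' * (eps / (2 * K')) = eps / 2) by (field; lra).
    assert (E2 : eps / (2 * (A + 1)) * Rabs B <= eps / 2 * (A / (A+1))).
    { change (Rabs B) with A. replace (eps / (2 * (A + 1)) * A) with (eps / 2 * (A / (A+1))) by (field; lra). lra. }
    assert (A / (A+1) < 1).
    { apply (Rmult_lt_reg_r (A+1)); [lra|]. field_simplify; lra. }
    assert (eps / 2 * (A / (A + 1)) < eps/2 * 1).
    { apply Rmult_lt_compat_l; [pose proof (cond_pos eps); lra| lra]. }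
    lra.
Qed.

Definition PI (f w : R -> R) (a b M V : R) : Prop :=
  ex_RInt (fun t => w t * f t) a b /\ @eq R (RInt (fun t => w t * f t) a b) M /\
  ex_RInt (fun t => t * (w t * f t)) a b /\ @eq R (RInt (fun t => t * (w t * f t)) a b) V.

Lemma sub_ex (h : R -> R) a b : 0 <= a <= b -> b <= 1 -> ex_RInt h 0 1 -> ex_RInt h a b.
Proof.
  intros Hab Hb H.
  apply (ex_RInt_Chasles_2 (V:=R_CompleteNormedModule) h 0 a b); [lra|].
  apply (ex_RInt_Chasles_1 (V:=R_CompleteNormedModule) h 0 b 1); [lra|auto].
Qed.

Lemma chasles_R (h : R -> R) a b c : ex_RInt h a b -> ex_RInt h b c ->
  @eq R (RInt h a c) (RInt h a b + RInt h b c).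
Proof.
  intros H1 H2. rewrite <- (RInt_Chasles h a b c H1 H2). reflexivity.
Qed.

Lemma diff_R (h : R -> R) a b : 0 <= a <= b -> b <= 1 -> ex_RInt h 0 1 ->
  @eq R (RInt h a b) (RInt h 0 b - RInt h 0 a).
Proof.
  intros Hab Hb H. rewrite (chasles_R h 0 a b).
  - lra.
  - apply sub_ex; [lra|lra|exact H].
  - apply sub_ex; [lra|lra|exact H].
Qed.

Lemma piece_gen (h w : R -> R) a b c : a <= b -> ex_RInt h a b ->
  (forall t, a < t < b -> w t = c) ->
  ex_RInt (fun t => w t * h t) a b /\ @eq R (RInt (fun t => w t * h t) a b) (c * RInt h a b).
Proof.
  intros Hab Hh Hw.
  assert (E : forall t, Rmin a b < t < Rmax a b -> c * h t = w t * h t).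
  { intros t Ht. rewrite Rmin_left, Rmax_right in Ht by lra. rewrite Hw by lra. reflexivity. }
  assert (H1 : ex_RInt (fun t => c * h t) a b).
  { apply (ex_RInt_scal (V:=R_NormedModule) h a b c Hh). }
  split.
  - apply (ex_RInt_ext (V:=R_NormedModule) _ _ a b E H1).
  - rewrite <- (RInt_ext (V:=R_CompleteNormedModule) _ _ a b E).
    apply (RInt_scal (V:=R_CompleteNormedModule) h a b c Hh).
Qed.

Lemma piece (f w : R -> R) a b c : 0 <= a <= b -> b <= 1 ->
  ex_RInt f 0 1 -> ex_RInt (fun t => t * f t) 0 1 ->
  (forall t, a < t < b -> w t = c) ->
  PI f w a b (c * (RInt f 0 b - RInt f 0 a))
             (c * (RInt (fun t => t * f t) 0 b - RInt (fun t => t * f t) 0 a)).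
Proof.
  intros Hab Hb Hf Hg Hw.
  destruct (piece_gen f w a b c ltac:(lra) (sub_ex f a b Hab Hb Hf) Hw) as [E1 E2].
  destruct (piece_gen (fun t => t * f t) w a b c ltac:(lra) (sub_ex _ a b Hab Hb Hg) Hw) as [E3 E4].
  assert (X : forall t, Rmin a b < t < Rmax a b -> w t * (t * f t) = t * (w t * f t)).
  { intros; ring. }
  split; [auto|split; [rewrite E2, diff_R; auto|split]].
  - eapply ex_RInt_ext; [apply X|auto].
  - rewrite <- (RInt_ext _ _ a b X), E4, diff_R; auto.
Qed.

Lemma glue (f w : R -> R) a b c M1 V1 M2 V2 :
  PI f w a b M1 V1 -> PI f w b c M2 V2 -> PI f w a c (M1 + M2) (V1 + V2).
Proof.
  intros [A1 [A2 [A3 A4]]] [B1 [B2 [B3 B4]]].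
  split; [eapply ex_RInt_Chasles; eauto|split].
  - rewrite (chasles_R _ a b c); auto. congruence.
  - split; [eapply ex_RInt_Chasles; eauto|].
    rewrite (chasles_R _ a b c); auto. congruence.
Qed.

Lemma PI_ext (f w w' : R -> R) a b M V : a <= b -> (forall t, a < t < b -> w t = w' t) ->
  PI f w a b M V -> PI f w' a b M V.
Proof.
  intros Hab E [A1 [A2 [A3 A4]]].
  assert (E1 : forall t, Rmin a b < t < Rmax a b -> w t * f t = w' t * f t).
  { intros t Ht; rewrite Rmin_left, Rmax_right in Ht by lra; rewrite E by lra; auto. }
  assert (E2 : forall t, Rmin a b < t < Rmax a b -> t * (w t * f t) = t * (w' t * f t)).
  { intros t Ht; rewrite Rmin_left, Rmax_right in Ht by lra; rewrite E by lra; auto. }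
  split; [|split; [|split]].
  - apply (ex_RInt_ext (V:=R_NormedModule) _ _ a b E1 A1).
  - rewrite <- (RInt_ext (V:=R_CompleteNormedModule) _ _ a b E1); auto.
  - apply (ex_RInt_ext (V:=R_NormedModule) _ _ a b E2 A3).
  - rewrite <- (RInt_ext (V:=R_CompleteNormedModule) _ _ a b E2); auto.
Qed.

Lemma ivt_F (f : R -> R) (th c : R) : 0 < th < 1 -> ex_RInt f 0 1 ->
  0 < c < RInt f 0 th -> exists x, 0 <= x <= th /\ RInt f 0 x = c.
Proof.
  intros Hth Hf Hc.
  set (fe := fun t => if Rle_dec 0 t then f t else 0).
  assert (Ep : forall z, 0 <= z <= 1 -> ex_RInt fe 0 z /\ RInt fe 0 z = RInt f 0 z).
  { intros z Hz.
    assert (E : forall t, Rmin 0 z < t < Rmax 0 z -> f t = fe t).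
    { intros t Ht; rewrite Rmin_left, Rmax_right in Ht by lra. unfold fe.
      destruct (Rle_dec 0 t); [auto|lra]. }
    split.
    - apply (ex_RInt_ext (V:=R_NormedModule) _ _ 0 z E). apply sub_ex; auto; lra.
    - symmetry. apply (RInt_ext (V:=R_CompleteNormedModule) _ _ 0 z E). }
  assert (En : forall z, -1 <= z <= 0 -> ex_RInt fe 0 z).
  { intros z Hz.
    assert (E : forall t, Rmin 0 z < t < Rmax 0 z -> (fun _ => 0) t = fe t).
    { intros t Ht; rewrite Rmin_right, Rmax_left in Ht by lra. unfold fe.
      destruct (Rle_dec 0 t); [lra|auto]. }
    apply (ex_RInt_ext (V:=R_NormedModule) _ _ 0 z E). apply ex_RInt_const. }
  assert (Hct : forall a, 0 <= a <= th -> continuity_pt (fun y => RInt fe 0 y - c) a).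
  { intros a Ha.
    apply continuity_pt_minus; [|apply continuity_pt_const; intros u v; reflexivity].
    apply continuity_pt_filterlim.
    apply (continuous_RInt_1 (V:=R_CompleteNormedModule) fe 0 a (fun y => RInt fe 0 y)).
    assert (Hd : 0 < 1 - th) by lra.
    exists (mkposreal _ Hd). intros y Hy.
    unfold ball in Hy; simpl in Hy; unfold AbsRing_ball, abs, minus, plus, opp in Hy; simpl in Hy.
    apply Rabs_lt_between' in Hy.
    apply RInt_correct.
    destruct (Rle_dec 0 y).
    - apply Ep; lra.
    - apply En; lra. }
  destruct (IVT_interv (fun y => RInt fe 0 y - c) 0 th Hct ltac:(lra)) as [x [Hx1 Hx2]].
  - rewrite RInt_point. simpl. unfold zero; simpl. lra.
  - destruct (Ep th ltac:(lra)) as [_ E]. rewrite E. lra.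
  - exists x. split; auto. destruct (Ep x ltac:(lra)) as [_ E]. rewrite <- E. lra.
Qed.

Lemma u_eq I S p : I <= p -> u I S p = p + S.
Proof. intros; unfold u; destruct (Rle_dec I p); lra. Qed.

Lemma F_mono (f : R -> R) a b : (forall x, 0 <= x <= 1 -> 0 < f x) -> ex_RInt f 0 1 ->
  0 <= a <= b -> b <= 1 -> RInt f 0 a <= RInt f 0 b.
Proof.
  intros Hp Hf Hab Hb.
  assert (0 <= RInt f a b).
  { apply RInt_ge_0; [lra| apply sub_ex; auto; lra|]. intros; apply Rlt_le, Hp; lra. }
  rewrite (diff_R f a b Hab Hb Hf) in H. lra.
Qed.

Lemma quot_lt N D p : 0 < D -> N / D - p < 0 -> N < p * D.
Proof.
  intros HD H. assert (N / D < p) by lra.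
  apply (Rmult_lt_compat_r D) in H0; auto.
  unfold Rdiv in H0. rewrite Rmult_assoc, Rinv_l in H0 by lra. lra.
Qed.

Ltac dec := repeat match goal with |- context [Rle_dec ?a ?b] => destruct (Rle_dec a b)
  | H : context [Rle_dec ?a ?b] |- _ => destruct (Rle_dec a b) end.

Lemma pc (f : R -> R) (Hf : ex_RInt f 0 1) (Hg : ex_RInt (fun t => t * f t) 0 1) (F G : R -> R) (EF : forall y, RInt f 0 y = F y) (EG : forall y, RInt (fun t => t * f t) 0 y = G y) w a b c : 0 <= a <= b -> b <= 1 -> (forall t, a < t < b -> w t = c) ->
  PI f w a b (c * (F b - F a)) (c * (G b - G a)).
Proof. intros; rewrite <- !EF, <- !EG; apply piece; auto. Qed.

Lemma pool2 (f : R -> R) (Hf : ex_RInt f 0 1) (Hg : ex_RInt (fun t => t * f t) 0 1) (F G : R -> R) (EF : forall y, RInt f 0 y = F y) (EG : forall y, RInt (fun t => t * f t) 0 y = G y) w a1 b c1 c2 : 0 <= a1 <= b -> b <= 1 ->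
  (forall t, 0 < t < a1 -> w t = c1) -> (forall t, a1 < t < b -> w t = c2) ->
  PI f w 0 b (c1 * (F a1 - F 0) + c2 * (F b - F a1)) (c1 * (G a1 - G 0) + c2 * (G b - G a1)).
Proof. intros. eapply glue; apply (pc f Hf Hg F G EF EG); auto; lra. Qed.

Lemma pool3 (f : R -> R) (Hf : ex_RInt f 0 1) (Hg : ex_RInt (fun t => t * f t) 0 1) (F G : R -> R) (EF : forall y, RInt f 0 y = F y) (EG : forall y, RInt (fun t => t * f t) 0 y = G y) w a1 a2 b c1 c2 c3 : 0 <= a1 <= a2 -> a2 <= b -> b <= 1 ->
  (forall t, 0 < t < a1 -> w t = c1) -> (forall t, a1 < t < a2 -> w t = c2) ->
  (forall t, a2 < t < b -> w t = c3) ->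
  PI f w 0 b (c1 * (F a1 - F 0) + c2 * (F a2 - F a1) + c3 * (F b - F a2))
             (c1 * (G a1 - G 0) + c2 * (G a2 - G a1) + c3 * (G b - G a2)).
Proof. intros. eapply glue; [apply (pool2 f Hf Hg F G EF EG)|apply (pc f Hf Hg F G EF EG)]; auto; lra. Qed.

Lemma pool4 (f : R -> R) (Hf : ex_RInt f 0 1) (Hg : ex_RInt (fun t => t * f t) 0 1) (F G : R -> R) (EF : forall y, RInt f 0 y = F y) (EG : forall y, RInt (fun t => t * f t) 0 y = G y) w a1 a2 a3 b c1 c2 c3 c4 : 0 <= a1 <= a2 -> a2 <= a3 -> a3 <= b -> b <= 1 ->
  (forall t, 0 < t < a1 -> w t = c1) -> (forall t, a1 < t < a2 -> w t = c2) ->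
  (forall t, a2 < t < a3 -> w t = c3) -> (forall t, a3 < t < b -> w t = c4) ->
  PI f w 0 b (c1 * (F a1 - F 0) + c2 * (F a2 - F a1) + c3 * (F a3 - F a2) + c4 * (F b - F a3))
             (c1 * (G a1 - G 0) + c2 * (G a2 - G a1) + c3 * (G a3 - G a2) + c4 * (G b - G a3)).
Proof. intros. eapply glue; [apply (pool3 f Hf Hg F G EF EG)|apply (pc f Hf Hg F G EF EG)]; auto; lra. Qed.

Lemma pool5 (f : R -> R) (Hf : ex_RInt f 0 1) (Hg : ex_RInt (fun t => t * f t) 0 1) (F G : R -> R) (EF : forall y, RInt f 0 y = F y) (EG : forall y, RInt (fun t => t * f t) 0 y = G y) w a1 a2 a3 a4 b c1 c2 c3 c4 c5 : 0 <= a1 <= a2 -> a2 <= a3 -> a3 <= a4 -> a4 <= b -> b <= 1 ->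
  (forall t, 0 < t < a1 -> w t = c1) -> (forall t, a1 < t < a2 -> w t = c2) ->
  (forall t, a2 < t < a3 -> w t = c3) -> (forall t, a3 < t < a4 -> w t = c4) ->
  (forall t, a4 < t < b -> w t = c5) ->
  PI f w 0 b (c1 * (F a1 - F 0) + c2 * (F a2 - F a1) + c3 * (F a3 - F a2) + c4 * (F a4 - F a3) + c5 * (F b - F a4))
             (c1 * (G a1 - G 0) + c2 * (G a2 - G a1) + c3 * (G a3 - G a2) + c4 * (G a4 - G a3) + c5 * (G b - G a4)).
Proof. intros. eapply glue; [apply (pool4 f Hf Hg F G EF EG)|apply (pc f Hf Hg F G EF EG)]; auto; lra. Qed.



Lemma PI_pool f w M V : PI f w 0 1 M V -> integrable_pool f w /\ mass f w = M /\ value f w = V.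
Proof. intros [A1 [A2 [A3 A4]]]. split; [split; auto| split; auto]. Qed.

Lemma RInt0 (h : R -> R) : @eq R (RInt h 0 0) 0.
Proof. rewrite RInt_point. reflexivity. Qed.

Theorem propositionB1 (f : R -> R) (S I theta0 pg mu thg thm th : R) :
  density_assumptions f ->
  0 < S -> 0 < I ->
  0 < theta0 < 1 -> theta0 - S = cmean_le f theta0 ->
  (forall x, 0 < x < 1 -> x - S = cmean_le f x -> x = theta0) ->
  I <= cmean_le f theta0 ->
  cmean_le f theta0 < pg -> pg < 1 - S ->
  0 < mu < 1 ->
  0 < th -> th < Rmin (pg + S) 1 ->
  thg < thm -> thm < pg ->
  pg + thg = 2 * thm ->
  2 * thm + 2 * S = th + pg + S ->
  thg >= I ->
  mu * thg + (1 - mu) * thm = cmean_le f th ->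
  (forall x, 0 <= x <= 1 -> cdf f x = mu * cdf f th -> thg >= cmean_le f x) ->
  (forall p', thg < p' <= pg ->
      (mu * cdf f th * thg + RInt (fun t => t * f t) th (p' + S)) /
      (mu * cdf f th + cdf f (p' + S) - cdf f th) - p' < 0) ->
  (forall p', pg < p' <= 1 - S ->
      ((1 - mu) * cdf f th * thm + RInt (fun t => t * f t) (Rmin (pg + S) 1) (p' + S)) /
      ((1 - mu) * cdf f th + cdf f (p' + S) - cdf f (Rmin (pg + S) 1)) - p' < 0) ->
  exists P : profile,
    is_equilibrium f I S pg P /\ sls_structure f S pg mu thg thm th P.
Proof.
  intros DA HS HI Ht0 Ht0e Huniq HIp0 Hp0 Hpg1 Hmu Hth0 Hth1 Hgm Hmp Ha Hb Hc Hd He Hff Hgg.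
  destruct DA as [Hpos [Hf [HF1 _]]].
  assert (HthG : Rmin (pg + S) 1 = pg + S) by (apply Rmin_left; lra).
  rewrite HthG in Hth1, Hgg.
  assert (Eth : th = thg + S) by lra.
  assert (HIg : I <= thg) by lra.
  assert (Hg : ex_RInt (fun t => t * f t) 0 1).
  { apply ex_RInt_Reals_1. apply (RI_mult_cont f (fun t => t) 0 1 1); [lra| | |apply ex_RInt_Reals_0; auto].
    - intros; exact (derivable_continuous_pt id x (derivable_id x)).
    - intros; rewrite Rabs_right; lra. }
  unfold cdf in *.
  set (F := fun y : R => (RInt f 0 y : R)).
  set (G := fun y : R => (RInt (fun t => t * f t) 0 y : R)).
  assert (EF : forall y, RInt f 0 y = F y) by reflexivity.
  assert (EG : forall y, RInt (fun t => t * f t) 0 y = G y) by reflexivity.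
  assert (F0 : F 0 = 0) by apply RInt0.
  assert (G0 : G 0 = 0) by apply RInt0.
  assert (Fmono : forall a b, 0 <= a <= b -> b <= 1 -> F a <= F b).
  { intros; apply F_mono; auto. }
  assert (Fd : forall a b, 0 <= a <= b -> b <= 1 -> RInt f a b = F b - F a).
  { intros; apply diff_R; auto. }
  assert (Gd : forall a b, 0 <= a <= b -> b <= 1 -> RInt (fun t => t * f t) a b = G b - G a).
  { intros; apply diff_R; auto. }
  assert (HFth : 0 < F th).
  { assert (0 <= F th) by (rewrite <- F0; apply Fmono; lra).
    destruct (Req_dec (F th) 0) as [E|E]; [|lra].
    exfalso. unfold cmean_le in Hd. rewrite EF, E in Hd. unfold Rdiv in Hd.
    rewrite Rinv_0, Rmult_0_r in Hd.
    assert (0 < mu * thg) by (apply Rmult_lt_0_compat; lra).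
    assert (0 < (1 - mu) * thm) by (apply Rmult_lt_0_compat; lra). lra. }
  destruct (ivt_F f th (mu * F th) ltac:(lra) Hf) as [x [Hx EFx]].
  { split; [apply Rmult_lt_0_compat; lra|].
    change (RInt f 0 th) with (F th). nra. }
  change (RInt f 0 x) with (F x) in EFx.
  assert (Hx0 : 0 < x).
  { destruct (Req_dec x 0) as [E|E]; [|lra]. rewrite E, F0 in EFx.
    assert (0 < mu * F th) by (apply Rmult_lt_0_compat; lra). lra. }
  assert (Hxth : x < th).
  { destruct (Req_dec x th) as [E|E]; [|lra]. rewrite E in EFx. nra. }
  assert (Hcx : thg >= cmean_le f x) by (apply He; [lra| exact EFx]).
  unfold cmean_le in Hcx, Hd. rewrite !EF, !EG in Hcx, Hd.
  set (cx := G x / F x) in *.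
  set (m := G th / F th) in *.
  assert (HFx : 0 < F x) by (rewrite EFx; apply Rmult_lt_0_compat; lra).
  assert (HGx : G x = cx * F x) by (unfold cx; field; lra).
  assert (HGth : G th = m * F th) by (unfold m; field; lra).
  clearbody cx m.
  assert (Hmg : thg < m) by (assert (0 < (1-mu)*(thm-thg)) by (apply Rmult_lt_0_compat; lra); lra).
  set (lam := (m - thg) / (m - cx)).
  assert (Hlam : 0 < lam <= 1).
  { unfold lam. split; [apply Rdiv_lt_0_compat; lra|].
    apply (Rmult_le_reg_r (m - cx)); [lra|]. unfold Rdiv; rewrite Rmult_assoc, Rinv_l by lra. lra. }
  assert (Elam : lam * (m - cx) = m - thg) by (unfold lam; field; lra).
  clearbody lam.
  set (A := lam + (1 - lam) * mu).
  set (B := (1 - lam) * mu).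
  assert (HA : 0 <= A <= 1) by (unfold A; nra).
  assert (HB : 0 <= B <= 1) by (unfold B; nra).
  assert (HMA : A * F x + B * (F th - F x) = mu * F th) by (unfold A, B; rewrite EFx; ring).
  assert (HVA : A * G x + B * (G th - G x) = mu * F th * thg).
  { unfold A, B. rewrite HGth, HGx, EFx.
    replace thg with (m - lam * (m - cx)) by lra. ring. }
  assert (HVM : (1 - A) * G x + (1 - B) * (G th - G x) = (1 - mu) * F th * thm).
  { replace ((1 - A) * G x + (1 - B) * (G th - G x)) with (G th - (A * G x + B * (G th - G x))) by ring.
    rewrite HVA, HGth, <- Hd. ring. }
  assert (HMM : (1 - A) * F x + (1 - B) * (F th - F x) = (1 - mu) * F th).
  { replace ((1 - A) * F x + (1 - B) * (F th - F x)) with (F th - (A * F x + B * (F th - F x))) by ring.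
    rewrite HMA. ring. }
  clearbody A B.
  assert (HGth2 : G th = mu * F th * thg + (1 - mu) * F th * thm) by (rewrite HGth, <- Hd; ring).
  assert (Hf2 : forall r, th < r <= pg + S ->
     mu * F th * thg + (G r - G th) < (r - S) * (mu * F th + F r - F th)).
  { intros r Hr. assert (H := Hff (r - S) ltac:(lra)).
    replace (r - S + S) with r in H by ring.
    rewrite Gd in H by lra. change (RInt f 0 r) with (F r) in H. change (RInt f 0 th) with (F th) in H.
    apply quot_lt in H; [lra|].
    assert (0 < mu * F th) by (apply Rmult_lt_0_compat; lra).
    assert (F th <= F r) by (apply Fmono; lra). lra. }
  assert (Hg2 : forall r, pg + S < r <= 1 ->
     (1 - mu) * F th * thm + (G r - G (pg + S)) < (r - S) * ((1 - mu) * F th + F r - F (pg + S))).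
  { intros r Hr. assert (H := Hgg (r - S) ltac:(lra)).
    replace (r - S + S) with r in H by ring.
    rewrite Gd in H by lra. change (RInt f 0 r) with (F r) in H. change (RInt f 0 th) with (F th) in H.
    change (RInt f 0 (pg + S)) with (F (pg + S)) in H.
    apply quot_lt in H; [lra|].
    assert (0 < (1 - mu) * F th) by (apply Rmult_lt_0_compat; lra).
    assert (F (pg + S) <= F r) by (apply Fmono; lra). lra. }
  assert (KeyR : forall r, pg + S <= r <= 1 -> G r < (r - S) * F r).
  { intros r Hr.
    assert (H1 := Hf2 (pg + S) ltac:(lra)).
    replace (pg + S - S) with pg in H1 by ring.
    assert (HD1 : F th <= F (pg + S)) by (apply Fmono; lra).
    assert (0 < mu * F th) by (apply Rmult_lt_0_compat; lra).
    assert (0 < (1 - mu) * F th) by (apply Rmult_lt_0_compat; lra).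
    destruct (Req_dec r (pg + S)) as [E|E].
    - subst r. replace (pg + S - S) with pg by ring.
      assert ((1 - mu) * F th * thm <= (1 - mu) * F th * pg) by (apply Rmult_le_compat_l; lra).
      replace (pg * F (pg + S)) with (pg * (mu * F th + F (pg + S) - F th) + (1 - mu) * F th * pg) by ring.
      lra.
    - assert (H2 := Hg2 r ltac:(lra)).
      assert (F (pg + S) <= F r) by (apply Fmono; lra).
      assert (pg * (mu * F th + F (pg + S) - F th) <= (r - S) * (mu * F th + F (pg + S) - F th))
        by (apply Rmult_le_compat_r; lra).
      replace ((r - S) * F r) with ((r - S) * (mu * F th + F (pg + S) - F th) + (r - S) * ((1 - mu) * F th + F r - F (pg + S))) by ring.
      lra. }
  assert (Hupg : u I S pg = pg + S) by (apply u_eq; lra).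
  assert (Huthg : u I S thg = thg + S) by (apply u_eq; lra).
  assert (Huthm : u I S thm = thm + S) by (apply u_eq; lra).
  pose (gv := fun t => if Rle_dec t x then A else if Rle_dec t th then B
                       else if Rle_dec t (pg + S) then 1 else 0).
  pose (mk := fun t => if Rle_dec t x then 1 - A else if Rle_dec t th then 1 - B else 0).
  pose (sr := fun t => if Rle_dec t th then 1 else 0).
  pose (sm := fun t => if Rle_dec t (thm + S) then 1 else 0).
  set (P := mkProfile gv mk sr sm sm thm thg thm).
  Ltac wt := intros ? ?; simpl; unfold w2r, w2n, none_w, le_ind, VG, VN, VM, V2 in *; simpl;
     repeat match goal with H := _ |- _ => progress unfold H end; simpl;
     repeat (rewrite u_eq by lra);
     unfold Rmax; dec; lra.
  assert (PGov : PI f gv 0 1 (A * (F x - F 0) + B * (F th - F x) + 1 * (F (pg + S) - F th) + 0 * (F 1 - F (pg + S)))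
                            (A * (G x - G 0) + B * (G th - G x) + 1 * (G (pg + S) - G th) + 0 * (G 1 - G (pg + S)))).
  { apply pool4; auto; try lra; wt. }
  assert (PMk : PI f mk 0 1 ((1 - A) * (F x - F 0) + (1 - B) * (F th - F x) + 0 * (F 1 - F th))
                            ((1 - A) * (G x - G 0) + (1 - B) * (G th - G x) + 0 * (G 1 - G th))).
  { apply pool3; auto; try lra; wt. }
  assert (PW2r : PI f (w2r P) 0 1 (A * (F x - F 0) + B * (F th - F x) + 0 * (F 1 - F th))
                            (A * (G x - G 0) + B * (G th - G x) + 0 * (G 1 - G th))).
  { apply pool3; auto; try lra; wt. }
  assert (PW2n : PI f (w2n P) 0 1 ((1 - A) * (F x - F 0) + (1 - B) * (F th - F x) + 0 * (F 1 - F th))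
                            ((1 - A) * (G x - G 0) + (1 - B) * (G th - G x) + 0 * (G 1 - G th))).
  { apply pool3; auto; try lra; wt. }
  assert (PGth : PI f gv 0 th (A * (F x - F 0) + B * (F th - F x)) (A * (G x - G 0) + B * (G th - G x))).
  { apply pool2; auto; try lra; wt. }
  assert (PMth : PI f mk 0 th ((1 - A) * (F x - F 0) + (1 - B) * (F th - F x)) ((1 - A) * (G x - G 0) + (1 - B) * (G th - G x))).
  { apply pool2; auto; try lra; wt. }
  apply PI_pool in PGov. apply PI_pool in PMk. apply PI_pool in PW2r. apply PI_pool in PW2n.
  rewrite F0, G0 in *.
  exists P. split.
  2:{ unfold sls_structure. rewrite HthG. simpl.
      split; [auto|split;[auto|split;[auto|]]].
      split; [intros t Ht; unfold gv, mk, sr, sm; dec; lra|].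
      destruct PGth as [_ [E1 [_ E2]]]. destruct PMth as [_ [_ [_ E3]]].
      change (cdf f th) with (F th).
      split; [rewrite E1; lra|]. split; [rewrite E2; lra|]. split; [rewrite E3; lra|].
      split; intros t Ht; unfold gv, mk, sr, sm; dec; lra. }
  destruct PGov as [IGov [MGov VGov]]. destruct PMk as [IMk [MMk VMk]].
  destruct PW2r as [IW2r [MW2r VW2r]]. destruct PW2n as [IW2n [MW2n VW2n]].
  split; [intros t Ht; simpl; unfold gv, mk, sr, sm; dec; lra|].
  split; [exact IGov|]. split; [exact IMk|]. split; [exact IW2r|]. split; [exact IW2n|].
  split.
  { intros t Ht. simpl. rewrite Huthg, Huthm. unfold sr, sm. dec; lra. }
  split.
  { intros t Ht. unfold none_w, VG, VM, VN, V2; simpl. rewrite Hupg, Huthg, Huthm.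
    unfold gv, mk, Rmax. dec; lra. }
  split.
  { unfold breaks_even; intros Hm. simpl in *. rewrite MMk, VMk in *.
    match goal with |- _ = _ * ?M => replace M with ((1 - mu) * F th) by lra end. lra. }
  split.
  { unfold breaks_even; intros Hm. simpl in *. rewrite MW2r, VW2r in *.
    match goal with |- _ = _ * ?M => replace M with (mu * F th) by lra end. lra. }
  split.
  { unfold breaks_even; intros Hm. simpl in *. rewrite MW2n, VW2n in *.
    match goal with |- _ = _ * ?M => replace M with ((1 - mu) * F th) by lra end. lra. }
  assert (Hmu1 : 0 < mu * F th) by (apply Rmult_lt_0_compat; lra).
  assert (Hmu2 : 0 < (1 - mu) * F th) by (apply Rmult_lt_0_compat; lra).
  split.
  { intros p' Hp' Hm. unfold P in Hp'; simpl in Hp'.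
    destruct (Rlt_le_dec p' pg) as [Hlt|Hge].
    - set (r := p' + thm - pg + S).
      assert (Hr : r = p' + thm - pg + S) by reflexivity. clearbody r.
      match goal with |- value f ?W < _ =>
        assert (PX : PI f W 0 1 (1 * (F r - F 0) + 0 * (F 1 - F r)) (1 * (G r - G 0) + 0 * (G 1 - G r))) end.
      { apply pool2; auto.
        - lra.
        - lra.
        - wt.
        - wt. }
      destruct (PI_pool _ _ _ _ PX) as [_ [EM EV]]. rewrite EM, EV in *. rewrite F0, G0 in *.
      assert (H := Hf2 r ltac:(lra)).
      assert (F th <= F r) by (apply Fmono; lra).
      assert (E1 : (r - S) * (mu * F th + F r - F th) <= p' * (mu * F th + F r - F th))
        by (apply Rmult_le_compat_r; lra).
      assert (E2 : (1 - mu) * F th * thm <= p' * ((1 - mu) * F th)).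
      { rewrite (Rmult_comm p'). apply Rmult_le_compat_l; lra. }
      lra.
    - destruct (Rle_lt_dec p' (1 - S)) as [Hle|Hgt].
      + match goal with |- value f ?W < _ =>
          assert (PX := pool2 f Hf Hg F G EF EG W (p' + S) 1 1 0 ltac:(lra) ltac:(lra) ltac:(wt) ltac:(wt)) end.
        destruct (PI_pool _ _ _ _ PX) as [_ [EM EV]]. rewrite EM, EV in *. rewrite F0, G0 in *.
        assert (H := KeyR (p' + S) ltac:(lra)). replace (p' + S - S) with p' in H by ring. lra.
      + match goal with |- value f ?W < _ =>
          assert (PX := pool2 f Hf Hg F G EF EG W 1 1 1 0 ltac:(lra) ltac:(lra) ltac:(wt) ltac:(intros; lra)) end.
        destruct (PI_pool _ _ _ _ PX) as [_ [EM EV]]. rewrite EM, EV in *. rewrite F0, G0 in *.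
        assert (H := KeyR 1 ltac:(lra)).
        assert (0 <= F 1) by (rewrite <- F0; apply Fmono; lra).
        assert ((1 - S) * F 1 <= p' * F 1) by (apply Rmult_le_compat_r; lra).
        lra. }
  split.
  { intros p' Hp' Hm. unfold P in Hp'; simpl in Hp'.
    destruct (Rle_lt_dec p' pg) as [Hle|Hgt].
    - match goal with |- value f ?W < _ =>
        assert (PX := pool4 f Hf Hg F G EF EG W x th (p' + S) 1 A B 1 0 ltac:(lra) ltac:(lra) ltac:(lra) ltac:(lra) ltac:(wt) ltac:(wt) ltac:(wt) ltac:(wt)) end.
      destruct (PI_pool _ _ _ _ PX) as [_ [EM EV]]. rewrite EM, EV in *. rewrite F0, G0 in *.
      assert (H := Hf2 (p' + S) ltac:(lra)). replace (p' + S - S) with p' in H by ring.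
      replace (A * (F x - 0) + B * (F th - F x) + 1 * (F (p' + S) - F th) + 0 * (F 1 - F (p' + S)))
        with (mu * F th + F (p' + S) - F th) by lra.
      lra.
    - match goal with |- value f ?W < _ =>
        assert (PX := pool4 f Hf Hg F G EF EG W x th (pg + S) 1 A B 1 0 ltac:(lra) ltac:(lra) ltac:(lra) ltac:(lra) ltac:(wt) ltac:(wt) ltac:(wt) ltac:(wt)) end.
      destruct (PI_pool _ _ _ _ PX) as [_ [EM EV]]. rewrite EM, EV in *. rewrite F0, G0 in *.
      assert (H := Hf2 (pg + S) ltac:(lra)). replace (pg + S - S) with pg in H by ring.
      replace (A * (F x - 0) + B * (F th - F x) + 1 * (F (pg + S) - F th) + 0 * (F 1 - F (pg + S)))
        with (mu * F th + F (pg + S) - F th) in * by lra.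
      assert (pg * (mu * F th + F (pg + S) - F th) < p' * (mu * F th + F (pg + S) - F th))
        by (apply Rmult_lt_compat_r; lra).
      lra. }
  { intros p' Hp' Hm. unfold P in Hp'; simpl in Hp'.
    destruct (Rle_lt_dec p' pg) as [Hle|Hgt].
    - match goal with |- value f ?W < _ =>
        assert (PX := pool3 f Hf Hg F G EF EG W x th 1 (1 - A) (1 - B) 0 ltac:(lra) ltac:(lra) ltac:(lra) ltac:(wt) ltac:(wt) ltac:(wt)) end.
      destruct (PI_pool _ _ _ _ PX) as [_ [EM EV]]. rewrite EM, EV in *. rewrite F0, G0 in *.
      replace ((1 - A) * (F x - 0) + (1 - B) * (F th - F x) + 0 * (F 1 - F th))
        with ((1 - mu) * F th) in * by lra.
      assert (thm * ((1 - mu) * F th) < p' * ((1 - mu) * F th)) by (apply Rmult_lt_compat_r; lra).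
      lra.
    - destruct (Rle_lt_dec p' (1 - S)) as [Hle|Hgt2].
      + match goal with |- value f ?W < _ =>
          assert (PX := pool5 f Hf Hg F G EF EG W x th (pg + S) (p' + S) 1 (1 - A) (1 - B) 0 1 0 ltac:(lra) ltac:(lra) ltac:(lra) ltac:(lra) ltac:(lra) ltac:(wt) ltac:(wt) ltac:(wt) ltac:(wt) ltac:(wt)) end.
        destruct (PI_pool _ _ _ _ PX) as [_ [EM EV]]. rewrite EM, EV in *. rewrite F0, G0 in *.
        assert (H := Hg2 (p' + S) ltac:(lra)). replace (p' + S - S) with p' in H by ring.
        replace ((1 - A) * (F x - 0) + (1 - B) * (F th - F x) + 0 * (F (pg + S) - F th) + 1 * (F (p' + S) - F (pg + S)) + 0 * (F 1 - F (p' + S)))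
          with ((1 - mu) * F th + F (p' + S) - F (pg + S)) by lra.
        lra.
      + match goal with |- value f ?W < _ =>
          assert (PX := pool4 f Hf Hg F G EF EG W x th (pg + S) 1 (1 - A) (1 - B) 0 1 ltac:(lra) ltac:(lra) ltac:(lra) ltac:(lra) ltac:(wt) ltac:(wt) ltac:(wt) ltac:(wt)) end.
        destruct (PI_pool _ _ _ _ PX) as [_ [EM EV]]. rewrite EM, EV in *. rewrite F0, G0 in *.
        assert (H := Hg2 1 ltac:(lra)).
        replace ((1 - A) * (F x - 0) + (1 - B) * (F th - F x) + 0 * (F (pg + S) - F th) + 1 * (F 1 - F (pg + S)))
          with ((1 - mu) * F th + F 1 - F (pg + S)) in * by lra.
        assert ((1 - S) * ((1 - mu) * F th + F 1 - F (pg + S)) < p' * ((1 - mu) * F th + F 1 - F (pg + S)))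
          by (apply Rmult_lt_compat_r; lra).
        lra. }
Qed.
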